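(* Let $T$ be a fair transition path, $p\in\mathbb{P}$ a nonfaulty proposer, $Q\in\mathcal{Q}$ a quorum all of whose members are nonfaulty, and $b\in\mathcal{B}$ a proposal number satisfying P1 and P2. If at some index $i$ of $T$ the proposer $p$ is ready to send prepare ($1a$) messages with proposal number $b$ to all members of $Q$, then there is an index $j$ such that in the configuration at index $j$ of $T$, $p$ has received promises ($1b$ messages) for $b$ from all members of $Q$.
   Context: Setting: the Synod consensus protocol modeled in a failure-aware actor model. An actor configuration is $\langle\alpha\,\|\,\bar\alpha\,\|\,\mu\rangle$ where $\alpha$ maps available actors to their states, $\bar\alpha$ maps failed actors to their states (states persist across failure), and $\mu$ is the multiset of messages en route. Transitions are base-level ($\mathbf{snd}$: an actor puts a message into $\mu$; $\mathbf{rcv}$: an actor removes a message addressed to it from $\mu$ and processes it; also $\mathbf{fun},\mathbf{new}$), which can only be taken by an available actor, and meta-level ($\mathbf{stp}$: an available actor becomes failed; $\mathbf{bgn}$: a failed actor becomes available). A transition path is a sequence of configurations indexed by natural numbers (logical time), each obtained from the previous by a transition; messages are never lost. Actors are partitioned into proposers $\mathbb{P}$ and acceptors $\mathbb{A}$; a quorum is a nonempty subset of $\mathbb{A}$. A message is a tuple $\langle s,r,k,b,v\rangle$ (sender, receiver, kind $k\in\{1a,1b,2a,2b\}$ = prepare, promise, accept, voted; proposal number $b$; value $v$). The local state of actor $x$ in configuration $\kappa$ consists of the set of received but not yet responded-to messages, the highest proposal number seen, and the value of the highest-numbered accepted proposal. Fair transition paths satisfy: if a $\mathbf{snd}$ or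 $\mathbf{rcv}$ transition is enabled for an actor at some index, then either it occurs at some later index or from some later index on it is permanently disabled. Protocol rules: an available acceptor holding an unresponded $1a$ message with number $b$ greater than its highest seen number becomes ready to send a $1b$ (promise) to the sender carrying $b$ and its highest accepted proposal number and value; a proposer that has received $1b$ messages for $b$ from all members of a quorum $Q$ becomes ready to send $2a$ messages with $b$ and a value chosen from its configuration to all members of $Q$; an available acceptor holding an unresponded $2a$ message with number $b$ at least its highest seen number becomes ready to send a $2b$ message with $b$ and the value to the sender; if a message addressed to an available actor is in $\mu$, a $\mathbf{rcv}$ of it is enabled. An actor $x$ is nonfaulty if: $x$ eventually becomes available whenever there is a message en route that $x$ must receive; $x$ eventually becomes available whenever its local state dictates it must send a message; and any enabled $\mathbf{snd}$ or $\mathbf{rcv}$ transition of $x$ either eventually occurs or is infinitely often enabled. A proposal number $b$ satisfies P1 and P2 if whenever an acceptor receives a prepare message with $b$, $b$ is greater than all proposal numbers that acceptor has previously seen, and whenever an acceptor receives an accept message with $b$, $b$ is greater than or equal to all proposal numbers it has previously seen. *)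

(* Defs.v *)
From Stdlib Require Import List Arith RelationClasses.
Import ListNotations.
Set Implicit Arguments.

(* Message kinds: 1a = prepare, 1b = promise, 2a = accept, 2b = voted. *)
Inductive kind := K1a | K1b | K2a | K2b.

Section Synod.
(* P = proposers, A = acceptors (the actors are partitioned: Actor = P + A),
   B = proposal numbers (ordered by lt), V = values. *)
Context {P A B V : Type} (lt : B -> B -> Prop).

Definition actor := (P + A)%type.

(* The "value" component is split in two fields:
   [mval] (the value of a 2a/2b message) and [macc] (for a 1b message: the
   number and value of the highest-numbered proposal accepted by the sender,
   if any). *)
Record msg := Msg {
  ms : actor; mr : actor; mk : kind; mb : B;
  mval : option V; macc : option (B * V) }.

Definition msg1a (p : P) (a : A) (b : B) : msg :=
  Msg (inl p) (inr a) K1a b None None.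

Record lstate := LS {
  unresp : list msg;          (* received but not yet responded-to messages *)
  hs     : option B;          (* highest proposal number seen (None = none) *)
  acc    : option (B * V);    (* highest-numbered accepted proposal          *)
  prep   : list msg           (* prepare (1a) messages a proposer has decided
                                 to send and not yet sent                    *)
}.

Definition gt_seen (b : B) (h : option B) : Prop :=
  match h with None => True | Some h => lt h b end.
Definition ge_seen (b : B) (h : option B) : Prop :=
  match h with None => True | Some h => ~ lt b h end.

Definition remove_one {X} (x : X) (l l' : list X) : Prop :=
  exists l1 l2, l = l1 ++ x :: l2 /\ l' = l1 ++ l2.

Definition quorum (Q : list A) : Prop := Q <> [].

(* Protocol rules for sending: [send_rule x s m s'] means that an actor [x]
   in local state [s] is ready to send [m], and that sending it leaves
   local state [s']. *)
Definition send_rule (x : actor) (s : lstate) (m : msg) (s' : lstate) : Prop :=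
  ms m = x /\
  match x, mk m with
  | inl p, K1a =>
      (exists a, mr m = inr a) /\
      mval m = None /\ macc m = None /\
      In m (prep s) /\
      exists pr', remove_one m (prep s) pr' /\
        s' = LS (unresp s) (hs s) (acc s) pr'
  | inr a, K1b =>
      (* acceptor holding an unresponded 1a message (that passed the
         "greater than highest seen" test, see recv_rule) promises *)
      exists m0, In m0 (unresp s) /\ mk m0 = K1a /\ mr m0 = x /\
        mr m = ms m0 /\ mb m = mb m0 /\ mval m = None /\ macc m = acc s /\
        exists u', remove_one m0 (unresp s) u' /\
          s' = LS u' (hs s) (acc s) (prep s)
  | inl p, K2a =>
      (* proposer with 1b messages for b from all members of a quorum Q
         sends 2a messages with b and a value chosen by the Paxos rule *)
      exists (Q : list A) (v : V),
        quorum Q /\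
        (forall a, In a Q -> exists m1, In m1 (unresp s) /\ mk m1 = K1b /\
            ms m1 = inr a /\ mr m1 = x /\ mb m1 = mb m) /\
        (exists a, In a Q /\ mr m = inr a) /\
        mval m = Some v /\ macc m = None /\
        (let S m1 := In m1 (unresp s) /\ mk m1 = K1b /\ mb m1 = mb m /\
                     exists a, In a Q /\ ms m1 = inr a in
         (forall m1, S m1 -> macc m1 = None) \/
         (exists m1 b0, S m1 /\ macc m1 = Some (b0, v) /\
            forall m2 b2 v2, S m2 -> macc m2 = Some (b2, v2) -> ~ lt b0 b2)) /\
        s' = s
  | inr a, K2b =>
      exists m0 v, In m0 (unresp s) /\ mk m0 = K2a /\ mr m0 = x /\
        mval m0 = Some v /\
        mr m = ms m0 /\ mb m = mb m0 /\ mval m = Some v /\ macc m = None /\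
        exists u', remove_one m0 (unresp s) u' /\
          s' = LS u' (hs s) (Some (mb m0, v)) (prep s)
  | _, _ => False
  end.

Definition recv_rule (x : actor) (s : lstate) (m : msg) (s' : lstate) : Prop :=
  match x with
  | inl _ => s' = LS (m :: unresp s) (hs s) (acc s) (prep s)
  | inr _ =>
      match mk m with
      | K1a => (gt_seen (mb m) (hs s) /\
                  s' = LS (m :: unresp s) (Some (mb m)) (acc s) (prep s))
               \/ (~ gt_seen (mb m) (hs s) /\ s' = s)
      | K2a => (ge_seen (mb m) (hs s) /\
                  s' = LS (m :: unresp s) (Some (mb m)) (acc s) (prep s))
               \/ (~ ge_seen (mb m) (hs s) /\ s' = s)
      | _ => s' = s
      end
  end.

(* Configuration <alpha || alpha-bar || mu>: every actor has a (persistent)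
   local state and is either available (up = true) or failed; mu is the
   multiset of messages en route. *)
Record config := Cfg {
  st : actor -> lstate;
  up : actor -> bool;
  mu : msg -> nat }.

Inductive label :=
  | Snd (x : actor) (m : msg)
  | Rcv (x : actor) (m : msg)
  | Fun (x : actor)
  | Stp (x : actor)
  | Bgn (x : actor).

Definition same_except {X Y} (x : X) (f g : X -> Y) : Prop :=
  forall y, y <> x -> g y = f y.

Definition step (k : config) (l : label) (k' : config) : Prop :=
  match l with
  | Snd x m =>
      up k x = true /\ send_rule x (st k x) m (st k' x) /\
      same_except x (st k) (st k') /\ up k' = up k /\
      mu k' m = S (mu k m) /\ same_except m (mu k) (mu k')
  | Rcv x m =>
      up k x = true /\ mr m = x /\ mu k m > 0 /\
      recv_rule x (st k x) m (st k' x) /\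
      same_except x (st k) (st k') /\ up k' = up k /\
      S (mu k' m) = mu k m /\ same_except m (mu k) (mu k')
  | Fun x =>
      (* internal step: a proposer decides to send prepare messages *)
      up k x = true /\ (exists p, x = inl p) /\
      (exists l, (forall m, In m l ->
                    exists a b, m = Msg x (inr a) K1a b None None) /\
         st k' x = LS (unresp (st k x)) (hs (st k x)) (acc (st k x))
                      (prep (st k x) ++ l)) /\
      same_except x (st k) (st k') /\ up k' = up k /\ mu k' = mu k
  | Stp x =>
      up k x = true /\ up k' x = false /\ same_except x (up k) (up k') /\
      st k' = st k /\ mu k' = mu k
  | Bgn x =>
      up k x = false /\ up k' x = true /\ same_except x (up k) (up k') /\
      st k' = st k /\ mu k' = mu k
  end.

Definition enabled (k : config) (l : label) : Prop := exists k', step k l k'.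

Definition path (T : nat -> config) (L : nat -> label) : Prop :=
  forall i, step (T i) (L i) (T (S i)).

Definition snd_or_rcv_of (x : actor) (l : label) : Prop :=
  exists m, l = Snd x m \/ l = Rcv x m.

Definition fair (T : nat -> config) (L : nat -> label) : Prop :=
  path T L /\
  forall x l i, snd_or_rcv_of x l -> enabled (T i) l ->
    (exists j, i <= j /\ L j = l) \/
    (exists j, i <= j /\ forall k, j <= k -> ~ enabled (T k) l).

Definition ready (s : lstate) (x : actor) (m : msg) : Prop :=
  exists s', send_rule x s m s'.

Definition nonfaulty (T : nat -> config) (L : nat -> label) (x : actor) : Prop :=
  (forall i, (exists m, mr m = x /\ mu (T i) m > 0) ->
             exists j, i <= j /\ up (T j) x = true) /\
  (forall i, (exists m, ready (st (T i) x) x m) ->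
             exists j, i <= j /\ up (T j) x = true) /\
  (forall l i, snd_or_rcv_of x l -> enabled (T i) l ->
     (exists j, i <= j /\ L j = l) \/
     (forall j, exists k, j <= k /\ enabled (T k) l)).

Definition P1 (T : nat -> config) (L : nat -> label) (b : B) : Prop :=
  forall i (a : A) m, L i = Rcv (inr a) m -> mk m = K1a -> mb m = b ->
    gt_seen b (hs (st (T i) (inr a))).
Definition P2 (T : nat -> config) (L : nat -> label) (b : B) : Prop :=
  forall i (a : A) m, L i = Rcv (inr a) m -> mk m = K2a -> mb m = b ->
    ge_seen b (hs (st (T i) (inr a))).

Definition has_promise (s : lstate) (p : P) (a : A) (b : B) : Prop :=
  exists m, In m (unresp s) /\ mk m = K1b /\ ms m = inr a /\ mr m = inl p /\
            mb m = b.

End Synod.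

(* Main.v *)
Require Import Defs.
From Stdlib Require Import List RelationClasses Arith Lia Classical ClassicalEpsilon.
Import ListNotations.

Section Helpers.
Context {P A B V : Type} (lt : B -> B -> Prop).

Definition upd {X Y : Type} (f : X -> Y) (x : X) (y : Y) : X -> Y :=
  fun z => if excluded_middle_informative (z = x) then y else f z.

Lemma upd_eq {X Y : Type} (f : X -> Y) x y : upd f x y x = y.
Proof. unfold upd; destruct excluded_middle_informative; congruence. Qed.

Lemma upd_neq {X Y : Type} (f : X -> Y) x y z : z <> x -> upd f x y z = f z.
Proof. unfold upd; destruct excluded_middle_informative; congruence. Qed.

Lemma enabled_snd (k : @config P A B V) x m s' :
  up k x = true -> send_rule lt x (st k x) m s' -> enabled lt k (Snd x m).
Proof.
  intros Hu Hs.
  exists (Cfg (upd (st k) x s') (up k) (upd (mu k) m (S (mu k m)))); simpl.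
  rewrite upd_eq, upd_eq. split; [auto|split; [auto|]].
  split; [intros y Hy; apply upd_neq; auto|].
  split; [auto|split; [auto|intros y Hy; apply upd_neq; auto]].
Qed.

Lemma enabled_rcv (k : @config P A B V) x m s' :
  up k x = true -> mr m = x -> mu k m > 0 -> recv_rule lt x (st k x) m s' ->
  enabled lt k (Rcv x m).
Proof.
  intros Hu Hr Hm Hs.
  exists (Cfg (upd (st k) x s') (up k) (upd (mu k) m (pred (mu k m)))); simpl.
  rewrite upd_eq, upd_eq. do 4 (split; [auto|]).
  split; [intros y Hy; apply upd_neq; auto|].
  split; [auto|split; [lia|intros y Hy; apply upd_neq; auto]].
Qed.

Lemma persist (R : nat -> Prop) (Ev : nat -> Prop) i :
  R i -> (forall k, i <= k -> R k -> ~ Ev k -> R (S k)) ->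
  forall j, i <= j -> (exists k, i <= k < j /\ Ev k) \/ R j.
Proof.
  intros Hi Hp j. induction j; intros Hij.
  - right. replace i with 0 in Hi by lia. auto.
  - destruct (Nat.eq_dec i (S j)) as [E|NE].
    + right; subst; auto.
    + destruct IHj as [[k [Hk Ek]]|Rj]; [lia| |].
      * left; exists k; split; [lia|auto].
      * destruct (classic (Ev j)) as [Ej|NEj].
        -- left; exists j; split; [lia|auto].
        -- right; apply Hp; auto; lia.
Qed.

Lemma fire (T : nat -> @config P A B V) L x l j :
  fair lt T L -> nonfaulty lt T L x -> snd_or_rcv_of x l -> enabled lt (T j) l ->
  exists j', j <= j' /\ L j' = l.
Proof.
  intros [_ Hf] [_ [_ Hn]] Hsr He.
  destruct (Hf x l j Hsr He) as [H|[j0 [Hj0 Hd]]]; auto.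
  destruct (Hn l j Hsr He) as [H|Hinf]; auto.
  destruct (Hinf j0) as [k [Hk Ek]]. exfalso; exact (Hd k Hk Ek).
Qed.

Lemma remove_in {X} (y z : X) l l' : remove_one y l l' -> In z l -> z <> y -> In z l'.
Proof.
  intros [l1 [l2 [E1 E2]]] Hin Hne; subst.
  apply in_app_or in Hin; apply in_or_app. destruct Hin as [H|[H|H]]; auto.
  congruence.
Qed.

Lemma pres_prep (k k' : @config P A B V) l p m1 :
  step lt k l k' -> l <> Snd (inl p) m1 ->
  In m1 (prep (st k (inl p))) -> In m1 (prep (st k' (inl p))).
Proof.
  intros Hs Hl Hin. destruct l as [x m|x m|x|x|x]; simpl in Hs.
  - destruct Hs as (Hu & Hsr & Hse & _).
    destruct (classic (x = inl p)) as [->|Hx].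
    + destruct Hsr as [Hms Hsr]. destruct (mk m); try contradiction.
      * destruct Hsr as (_ & _ & _ & _ & pr' & Hrem & ->). simpl.
        eapply remove_in; eauto. intro; subst; auto.
      * destruct Hsr as (Q & v & _ & _ & _ & _ & _ & _ & ->). auto.
    + rewrite Hse by congruence; auto.
  - destruct Hs as (Hu & Hr & Hm & Hrr & Hse & _).
    destruct (classic (x = inl p)) as [->|Hx].
    + simpl in Hrr. rewrite Hrr. auto.
    + rewrite Hse by congruence; auto.
  - destruct Hs as (Hu & _ & [l0 [_ Hst]] & Hse & _).
    destruct (classic (x = inl p)) as [->|Hx].
    + rewrite Hst; simpl; apply in_or_app; auto.
    + rewrite Hse by congruence; auto.
  - destruct Hs as (_ & _ & _ & -> & _); auto.
  - destruct Hs as (_ & _ & _ & -> & _); auto.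
Qed.

Lemma pres_mu (k k' : @config P A B V) l m :
  step lt k l k' -> l <> Rcv (mr m) m -> mu k m > 0 -> mu k' m > 0.
Proof.
  intros Hs Hl Hm. destruct l as [x m0|x m0|x|x|x]; simpl in Hs.
  - destruct Hs as (_ & _ & _ & _ & Hmu & Hse).
    destruct (classic (m = m0)) as [->|Hne]; [lia|]. rewrite Hse; auto.
  - destruct Hs as (_ & Hr & _ & _ & _ & _ & _ & Hse).
    destruct (classic (m = m0)) as [->|Hne]; [subst; congruence|]. rewrite Hse; auto.
  - destruct Hs as (_ & _ & _ & _ & _ & ->); auto.
  - destruct Hs as (_ & _ & _ & _ & ->); auto.
  - destruct Hs as (_ & _ & _ & _ & ->); auto.
Qed.

Definition Ev1b (p : P) (a : A) (b : B) (l : @label P A B V) : Prop :=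
  exists m', l = Snd (inr a) m' /\ mk m' = K1b /\ mr m' = inl p /\ mb m' = b.

Lemma pres_unresp (k k' : @config P A B V) l p a b :
  step lt k l k' -> ~ Ev1b p a b l ->
  In (msg1a p a b) (unresp (st k (inr a))) -> In (msg1a p a b) (unresp (st k' (inr a))).
Proof.
  intros Hs Hl Hin. destruct l as [x m|x m|x|x|x]; simpl in Hs.
  - destruct Hs as (Hu & Hsr & Hse & _).
    destruct (classic (x = inr a)) as [->|Hx].
    + destruct Hsr as [Hms Hsr]. destruct (mk m) eqn:Ek; try contradiction.
      * destruct Hsr as (m0 & Hm0 & Hk0 & Hr0 & Hmr & Hmb & _ & _ & u' & Hrem & ->).
        simpl. eapply remove_in; eauto. intro E; subst m0.
        apply Hl. exists m; simpl in *; auto.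
      * destruct Hsr as (m0 & v & Hm0 & Hk0 & _ & _ & _ & _ & _ & _ & u' & Hrem & ->).
        simpl. eapply remove_in; eauto. intro E; subst m0. simpl in Hk0; discriminate.
    + rewrite Hse by congruence; auto.
  - destruct Hs as (Hu & Hr & Hm & Hrr & Hse & _).
    destruct (classic (x = inr a)) as [->|Hx].
    + simpl in Hrr. destruct (mk m).
      * destruct Hrr as [[_ ->]|[_ ->]]; simpl; auto.
      * rewrite Hrr; auto.
      * destruct Hrr as [[_ ->]|[_ ->]]; simpl; auto.
      * rewrite Hrr; auto.
    + rewrite Hse by congruence; auto.
  - destruct Hs as (Hu & _ & [l0 [_ Hst]] & Hse & _).
    destruct (classic (x = inr a)) as [->|Hx].
    + rewrite Hst; simpl; auto.
    + rewrite Hse by congruence; auto.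
  - destruct Hs as (_ & _ & _ & -> & _); auto.
  - destruct Hs as (_ & _ & _ & -> & _); auto.
Qed.

Lemma mono_prop (k k' : @config P A B V) l p :
  step lt k l k' -> incl (unresp (st k (inl p))) (unresp (st k' (inl p))).
Proof.
  intros Hs z Hin. destruct l as [x m|x m|x|x|x]; simpl in Hs.
  - destruct Hs as (Hu & Hsr & Hse & _).
    destruct (classic (x = inl p)) as [->|Hx].
    + destruct Hsr as [Hms Hsr]. destruct (mk m); try contradiction.
      * destruct Hsr as (_ & _ & _ & _ & pr' & Hrem & ->). auto.
      * destruct Hsr as (Q & v & _ & _ & _ & _ & _ & _ & ->). auto.
    + rewrite Hse by congruence; auto.
  - destruct Hs as (Hu & Hr & Hm & Hrr & Hse & _).
    destruct (classic (x = inl p)) as [->|Hx].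
    + simpl in Hrr. rewrite Hrr. simpl; auto.
    + rewrite Hse by congruence; auto.
  - destruct Hs as (Hu & _ & [l0 [_ Hst]] & Hse & _).
    destruct (classic (x = inl p)) as [->|Hx].
    + rewrite Hst; simpl; auto.
    + rewrite Hse by congruence; auto.
  - destruct Hs as (_ & _ & _ & -> & _); auto.
  - destruct Hs as (_ & _ & _ & -> & _); auto.
Qed.

End Helpers.

Section Main.
Context {P A B V : Type} (lt : B -> B -> Prop).

Lemma rcv_phase (T : nat -> @config P A B V) L x m i :
  fair lt T L -> nonfaulty lt T L x -> mr m = x -> mu (T i) m > 0 ->
  (forall k, exists s', recv_rule lt x (st (T k) x) m s') ->
  exists k, i <= k /\ L k = Rcv x m.
Proof.
  intros Hf Hn Hr Hm Hex.
  destruct Hn as [Hn1 Hn23].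
  destruct (Hn1 i (ex_intro _ m (conj Hr Hm))) as [j [Hij Hup]].
  destruct (persist (fun k => mu (T k) m > 0) (fun k => L k = Rcv x m) i Hm)
    with (j := j) as [[k [Hk Ek]]|Rj]; auto.
  - intros k _ Rk NE. eapply pres_mu; [apply (proj1 Hf k)| |exact Rk].
    rewrite Hr; exact NE.
  - exists k; split; [lia|auto].
  - destruct (Hex j) as [s' Hs'].
    destruct (fire lt T L x (Rcv x m) j Hf (conj Hn1 Hn23)) as [k [Hk Ek]].
    + exists m; right; reflexivity.
    + eapply enabled_rcv; eauto.
    + exists k; split; [lia|auto].
Qed.

Lemma ready1b (s : @lstate P A B V) p a b :
  In (msg1a p a b) (unresp s) ->
  exists s', send_rule lt (inr a) s (Msg (inr a) (inl p) K1b b None (acc s)) s'.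
Proof.
  intros Hin. destruct (in_split _ _ Hin) as [l1 [l2 E]].
  exists (LS (l1 ++ l2) (hs s) (acc s) (prep s)).
  split; [reflexivity|]. simpl.
  exists (msg1a p a b). split; [auto|]. do 6 (split; [reflexivity|]).
  exists (l1 ++ l2). split; [exists l1, l2; split; auto|reflexivity].
Qed.

Lemma per_a (T : nat -> @config P A B V) L p a b i :
  fair lt T L -> nonfaulty lt T L (inl p) -> nonfaulty lt T L (inr a) ->
  P1 lt T L b ->
  ready lt (st (T i) (inl p)) (inl p) (msg1a p a b) ->
  exists j, has_promise (st (T j) (inl p)) p a b.
Proof.
  intros Hf Hnp Hna HP1 Hrd.
  pose proof (proj1 Hf) as Hpath.
  set (m1 := msg1a p a b) in *.
  assert (Hin : In m1 (prep (st (T i) (inl p)))).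
  { destruct Hrd as [s' [_ Hsr]]. simpl in Hsr. tauto. }
  assert (Hk1 : exists k, i <= k /\ L k = Snd (inl p) m1).
  { destruct (proj1 (proj2 Hnp) i (ex_intro _ m1 Hrd)) as [j [Hij Hup]].
    destruct (persist (fun k => In m1 (prep (st (T k) (inl p))))
                (fun k => L k = Snd (inl p) m1) i Hin) with (j := j)
      as [[k [Hk Ek]]|Rj]; auto.
    - intros k _ Rk NE. eapply pres_prep; eauto.
    - exists k; split; [lia|auto].
    - destruct (in_split _ _ Rj) as [l1 [l2 E]].
      destruct (fire lt T L (inl p) (Snd (inl p) m1) j Hf Hnp) as [k [Hk Ek]].
      + exists m1; left; reflexivity.
      + apply enabled_snd with (s' := LS (unresp (st (T j) (inl p))) (hs (st (T j) (inl p)))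
               (acc (st (T j) (inl p))) (l1 ++ l2)); auto.
        split; [reflexivity|]. simpl.
        split; [exists a; reflexivity|]. do 3 (split; [auto|]).
        exists (l1 ++ l2). split; [exists l1, l2; split; auto|reflexivity].
      + exists k; split; [lia|auto]. }
  destruct Hk1 as [k1 [Hk1 E1]].
  assert (Hmu1 : mu (T (S k1)) m1 > 0).
  { pose proof (Hpath k1) as Hs. rewrite E1 in Hs. simpl in Hs.
    destruct Hs as (_ & _ & _ & _ & -> & _). lia. }
  destruct (rcv_phase T L (inr a) m1 (S k1) Hf Hna eq_refl Hmu1) as [k2 [Hk2 E2]].
  { intros k. destruct (classic (gt_seen lt b (hs (st (T k) (inr a))))) as [G|G].
    - eexists. simpl. left. split; [exact G|reflexivity].
    - eexists. simpl. right. split; [exact G|reflexivity]. }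
  assert (Hin2 : In m1 (unresp (st (T (S k2)) (inr a)))).
  { pose proof (HP1 k2 a m1 E2 eq_refl eq_refl) as G.
    pose proof (Hpath k2) as Hs. rewrite E2 in Hs. simpl in Hs.
    destruct Hs as (_ & _ & _ & Hrr & _).
    destruct Hrr as [[_ ->]|[G' _]]; [simpl; auto|contradiction]. }
  assert (Hk3 : exists k, S k2 <= k /\ Ev1b p a b (L k)).
  { destruct (proj1 (proj2 Hna) (S k2)) as [j [Hij Hup]].
    { destruct (ready1b _ p a b Hin2) as [s' Hs']. eexists; exists s'; exact Hs'. }
    destruct (persist (fun k => In m1 (unresp (st (T k) (inr a))))
                (fun k => Ev1b p a b (L k)) (S k2) Hin2) with (j := j)
      as [[k [Hk Ek]]|Rj]; auto.
    - intros k _ Rk NE. eapply pres_unresp; eauto.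
    - exists k; split; [lia|auto].
    - destruct (ready1b _ p a b Rj) as [s' Hs'].
      destruct (fire lt T L (inr a) (Snd (inr a) (Msg (inr a) (inl p) K1b b None (acc (st (T j) (inr a))))) j Hf Hna) as [k [Hk Ek]].
      + eexists; left; reflexivity.
      + eapply enabled_snd; eauto.
      + exists k; split; [lia|]. rewrite Ek. eexists; split; [reflexivity|].
        simpl; auto. }
  destruct Hk3 as [k3 [Hk3 [m' [E3 [Hk' [Hr' Hb']]]]]].
  assert (Hmu3 : mu (T (S k3)) m' > 0 /\ ms m' = inr a).
  { pose proof (Hpath k3) as Hs. rewrite E3 in Hs. simpl in Hs.
    destruct Hs as (_ & [Hms _] & _ & _ & -> & _). split; [lia|auto]. }
  destruct Hmu3 as [Hmu3 Hms'].
  destruct (rcv_phase T L (inl p) m' (S k3) Hf Hnp Hr' Hmu3) as [k4 [Hk4 E4]].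
  { intros k. eexists. simpl. reflexivity. }
  exists (S k4).
  pose proof (Hpath k4) as Hs. rewrite E4 in Hs. simpl in Hs.
  destruct Hs as (_ & _ & _ & Hrr & _). rewrite Hrr.
  exists m'. simpl. auto.
Qed.

Lemma mono_promise (T : nat -> @config P A B V) L p a b j j' :
  path lt T L -> j <= j' ->
  has_promise (st (T j) (inl p)) p a b -> has_promise (st (T j') (inl p)) p a b.
Proof.
  intros Hpath Hjj. induction Hjj; auto.
  intros H. destruct (IHHjj H) as [mm [Hin Hm]]. exists mm; split; auto.
  eapply mono_prop; eauto.
Qed.

End Main.

Theorem lemma1 {P A B V : Type} (lt : B -> B -> Prop)
  (lt_strict : StrictOrder lt)
  (lt_total : forall x y : B, lt x y \/ x = y \/ lt y x)
  (T : nat -> @config P A B V) (L : nat -> @label P A B V)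
  (p : P) (Q : list A) (b : B) :
  fair lt T L ->
  nonfaulty lt T L (inl p) ->
  quorum Q ->
  (forall a, In a Q -> nonfaulty lt T L (inr a)) ->
  P1 lt T L b -> P2 lt T L b ->
  forall i, (forall a, In a Q ->
               ready lt (st (T i) (inl p)) (inl p) (@msg1a P A B V p a b)) ->
  exists j, forall a, In a Q -> has_promise (st (T j) (inl p)) p a b.
Proof.
  intros Hf Hnp _ HnQ HP1 _ i Hrd.
  clear lt_strict lt_total.
  induction Q as [|a Q IH].
  - exists 0; intros a [].
  - destruct IH as [J HJ].
    + intros a' H; apply HnQ; simpl; auto.
    + intros a' H; apply Hrd; simpl; auto.
    + destruct (per_a lt T L p a b i Hf Hnp (HnQ a (or_introl eq_refl)) HP1
                  (Hrd a (or_introl eq_refl))) as [ja Hja].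
      exists (Nat.max J ja). intros a' [<-|H].
      * eapply mono_promise; [exact (proj1 Hf)| |exact Hja]; lia.
      * eapply mono_promise; [exact (proj1 Hf)| |exact (HJ a' H)]; lia.
Qed.
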